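(* Let $a,b,c\ge 0$ be integers with $\gcd(a,b,c)=1$ and let $M$ be the list of vectors of $\mathbb{F}_2^2$ consisting of $(1,0)$ with multiplicity $a$, $(0,1)$ with multiplicity $b$ and $(1,1)$ with multiplicity $c$, assumed to generate $\mathbb{F}_2^2$. Let $K=K(G(\mathbb{F}_2^2,M))$. Then $$\operatorname{Syl}_2 K\cong\begin{cases}\mathbb{Z}/2^{v_2(b+c)+1}\mathbb{Z} & a\text{ odd},\ b,c\text{ even},\\ \mathbb{Z}/2^{v_2(a+b)+1}\mathbb{Z} & a,b\text{ odd},\ c\text{ even},\\ \mathbb{Z}/2^{e}\mathbb{Z}\times\mathbb{Z}/2^{f}\mathbb{Z} & a,b,c\text{ odd},\end{cases}$$ where $f=\max(v_2(a+b),v_2(b+c),v_2(a+c))+1$ and $e=v_2(|K|)-f$.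
   Context: For a finite list $M=(v_1,\dots,v_n)$ of nonzero vectors generating $\mathbb{F}_2^r$, the Cayley graph $G(\mathbb{F}_2^r,M)$ has vertex set $\mathbb{F}_2^r$ and Laplacian $L$ indexed by $\mathbb{F}_2^r$ with $L_{u,u}=n$ and $L_{u,w}=-\#\{i:u+v_i=w\}$ for $u\ne w$; $\operatorname{coker}L\cong\mathbb{Z}\oplus K(G)$ with $K(G)$ finite abelian (the sandpile group). $v_2$ denotes the $2$-adic valuation of a nonzero integer. *)

(* Defs.v *)
From HB Require Import structures.
From mathcomp Require Import all_boot all_order all_algebra all_fingroup all_solvable.
Set Implicit Arguments. Unset Strict Implicit. Unset Printing Implicit Defensive.
Import GRing.Theory.
Local Open Scope ring_scope.

Notation F2vec r := 'rV['F_2]_r.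

Definition cayley_lap (r : nat) (M : seq (F2vec r)) (u w : F2vec r) : int :=
  if u == w then (size M)%:Z else - (count (fun v => u + v == w) M)%:Z.

Definition lap_mul (r : nat) (M : seq (F2vec r)) (z : {ffun F2vec r -> int})
  : {ffun F2vec r -> int} :=
  [ffun u => \sum_(w : F2vec r) cayley_lap M u w * z w].

(* [is_sandpile_group M K] : coker L is isomorphic to Z (+) K, witnessed by a
   surjective group homomorphism Z^V -> Z x K whose kernel is exactly im L. *)
Definition is_sandpile_group (r : nat) (M : seq (F2vec r))
  (gT : finGroupType) (K : {group gT}) : Prop :=
  exists (f : {ffun F2vec r -> int} -> int) (g : {ffun F2vec r -> int} -> gT),
    [/\ (forall x y, f (x + y) = f x + f y),
        (forall x y, g (x + y) = (g x * g y)%g),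
        (forall x, g x \in K),
        (forall (n : int) (k : gT), k \in K -> exists x, f x = n /\ g x = k)
      & (forall x, (f x = 0 /\ g x = 1%g) <-> exists z, x = lap_mul M z)].

Definition e1 : F2vec 2 := delta_mx 0 0.
Definition e2 : F2vec 2 := delta_mx 0 1.
Definition e12 : F2vec 2 := e1 + e2.

Definition Mabc (a b c : nat) : seq (F2vec 2) :=
  nseq a e1 ++ nseq b e2 ++ nseq c e12.

(* Main.v *)
Require Import Defs.
From HB Require Import structures.
From mathcomp Require Import all_boot all_order all_algebra all_fingroup all_solvable.
From mathcomp Require Import ring zify.
Set Implicit Arguments. Unset Strict Implicit. Unset Printing Implicit Defensive.

Module A1.
Import GRing.Theory.
Local Open Scope ring_scope.

Lemma F2_cases (x : 'F_2) : x = 0 \/ x = 1.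
Proof. by case: x => [[|[|]]] //= H; [left|right]; apply/val_inj. Qed.

Lemma ord2_cases (j : 'I_2) : j = 0 \/ j = 1.
Proof. by case: j => [[|[|]]] //= H; [left|right]; apply/val_inj. Qed.

Lemma row2_eq (u v : F2vec 2) : u 0 0 = v 0 0 -> u 0 1 = v 0 1 -> u = v.
Proof. by move=> H0 H1; apply/rowP => j; case: (ord2_cases j) => ->. Qed.

Lemma e1E0 : e1 0 0 = 1. Proof. by rewrite mxE. Qed.
Lemma e1E1 : e1 0 1 = 0. Proof. by rewrite mxE. Qed.
Lemma e2E0 : e2 0 0 = 0. Proof. by rewrite mxE. Qed.
Lemma e2E1 : e2 0 1 = 1. Proof. by rewrite mxE. Qed.
Lemma e12E0 : e12 0 0 = 1. Proof. by rewrite /e12 mxE e1E0 e2E0 addr0. Qed.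
Lemma e12E1 : e12 0 1 = 1. Proof. by rewrite /e12 mxE e1E1 e2E1 add0r. Qed.

Lemma F2_11 : (1 + 1 : 'F_2) = 0. Proof. by apply/val_inj. Qed.
Definition eE := (e1E0, e1E1, e2E0, e2E1, e12E0, e12E1, mxE, addr0, add0r, F2_11).

Lemma vec4 (u : F2vec 2) : [\/ u = 0, u = e1, u = e2 | u = e12].
Proof.
case: (F2_cases (u 0 0)) => H0; case: (F2_cases (u 0 1)) => H1.
- by constructor 1; apply: row2_eq; rewrite ?H0 ?H1 ?mxE.
- by constructor 3; apply: row2_eq; rewrite ?H0 ?H1 ?eE.
- by constructor 2; apply: row2_eq; rewrite ?H0 ?H1 ?eE.
- by constructor 4; apply: row2_eq; rewrite ?H0 ?H1 ?eE.
Qed.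

Lemma F2_10 : (1 : 'F_2) != 0. Proof. by []. Qed.

Ltac solve_row := apply: row2_eq; rewrite ?mxE ?eE ?F2_11 ?addr0 ?add0r //.
Ltac solve_neq := apply/eqP => /(congr1 (fun m : F2vec 2 => (m 0 0, m 0 1))); rewrite ?mxE ?eE; case.

Lemma e1e1 : e1 + e1 = 0. Proof. solve_row. Qed.
Lemma e2e2 : e2 + e2 = 0. Proof. solve_row. Qed.
Lemma e12e12 : e12 + e12 = 0. Proof. solve_row. Qed.
Lemma e2e1 : e2 + e1 = e12. Proof. solve_row. Qed.
Lemma e1e2 : e1 + e2 = e12. Proof. by []. Qed.
Lemma e12e1 : e12 + e1 = e2. Proof. solve_row. Qed.
Lemma e12e2 : e12 + e2 = e1. Proof. solve_row. Qed.
Lemma e1e12 : e1 + e12 = e2. Proof. solve_row. Qed.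
Lemma e2e12 : e2 + e12 = e1. Proof. solve_row. Qed.

Lemma ne10 : e1 != 0. Proof. by solve_neq. Qed.
Lemma ne20 : e2 != 0. Proof. by solve_neq. Qed.
Lemma ne120 : e12 != 0. Proof. by solve_neq. Qed.
Lemma ne12 : e1 != e2. Proof. by solve_neq. Qed.
Lemma ne112 : e1 != e12. Proof. by solve_neq. Qed.
Lemma ne212 : e2 != e12. Proof. by solve_neq. Qed.

Lemma addr_eqself (u x : F2vec 2) : (u + x == u) = (x == 0).
Proof. by rewrite -subr_eq0 addrAC subrr add0r. Qed.

Lemma sum_ind (t : F2vec 2) (F : F2vec 2 -> int) :
  \sum_(w : F2vec 2) (if t == w then F w else 0) = F t.
Proof. by rewrite -big_mkcond (big_pred1 t) // => w; rewrite /= eq_sym. Qed.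

Lemma lapE (a b c : nat) z u :
  lap_mul (Mabc a b c) z u =
  (a + b + c)%:Z * z u - a%:Z * z (u + e1) - b%:Z * z (u + e2) - c%:Z * z (u + e12).
Proof.
rewrite ffunE.
have hc w : count (fun v => u + v == w) (Mabc a b c) =
   (((u + e1)%R == w) * a + ((u + e2)%R == w) * b + ((u + e12)%R == w) * c)%N.
  by rewrite /Mabc !count_cat !count_nseq /= addnA.
transitivity (\sum_(w : F2vec 2) ((if u == w then (a + b + c)%:Z * z w else 0)
   - (if u + e1 == w then a%:Z * z w else 0)
   - (if u + e2 == w then b%:Z * z w else 0)
   - (if u + e12 == w then c%:Z * z w else 0))).
  apply: eq_bigr => w _; rewrite /cayley_lap hc.
  case: (eqVneq u w) => [<-|neq].
    rewrite !addr_eqself (negbTE ne10) (negbTE ne20) (negbTE ne120) /=.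
    by rewrite !subr0 !size_cat !size_nseq addnA.
  case: (u + e1 == w); case: (u + e2 == w); case: (u + e12 == w);
   rewrite /= ?mul1n ?mul0n ?add0n ?addn0 ?sub0r ?subr0 ?PoszD ?opprD ?mulrDl ?mulNr ?muln1 ?mul1n; ring.
by rewrite !big_split /= !sumrN !sum_ind.
Qed.

Definition mk4_def (x0 x1 x2 x3 : int) : {ffun F2vec 2 -> int} :=
  [ffun u => if u == 0 then x0 else if u == e1 then x1 else if u == e2 then x2 else x3].
Definition mk4 := locked mk4_def.

Lemma mk4_0 x0 x1 x2 x3 : mk4 x0 x1 x2 x3 0 = x0.
Proof. by rewrite /mk4 -lock ffunE eqxx. Qed.
Lemma mk4_1 x0 x1 x2 x3 : mk4 x0 x1 x2 x3 e1 = x1.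
Proof. by rewrite /mk4 -lock ffunE (negbTE ne10) eqxx. Qed.
Lemma mk4_2 x0 x1 x2 x3 : mk4 x0 x1 x2 x3 e2 = x2.
Proof. by rewrite /mk4 -lock ffunE (negbTE ne20) eq_sym (negbTE ne12) eqxx. Qed.
Lemma mk4_3 x0 x1 x2 x3 : mk4 x0 x1 x2 x3 e12 = x3.
Proof. by rewrite /mk4 -lock ffunE (negbTE ne120) !(eq_sym e12) (negbTE ne112) (negbTE ne212). Qed.
Definition mk4E := (mk4_0, mk4_1, mk4_2, mk4_3).

Lemma ffun_eq4 (y z : {ffun F2vec 2 -> int}) :
  y 0 = z 0 -> y e1 = z e1 -> y e2 = z e2 -> y e12 = z e12 -> y = z.
Proof. by move=> H0 H1 H2 H3; apply/ffunP => u; case: (vec4 u) => ->. Qed.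

Lemma ffun4 (z : {ffun F2vec 2 -> int}) : z = mk4 (z 0) (z e1) (z e2) (z e12).
Proof. by apply: ffun_eq4; rewrite mk4E. Qed.

Lemma mk4_eq x0 x1 x2 x3 y0 y1 y2 y3 :
  x0 = y0 -> x1 = y1 -> x2 = y2 -> x3 = y3 -> mk4 x0 x1 x2 x3 = mk4 y0 y1 y2 y3.
Proof. by move=> -> -> -> ->. Qed.

Lemma mk4_inj x0 x1 x2 x3 y0 y1 y2 y3 :
  mk4 x0 x1 x2 x3 = mk4 y0 y1 y2 y3 -> [/\ x0 = y0, x1 = y1, x2 = y2 & x3 = y3].
Proof.
move=> H; split.
- by have := congr1 (fun z : {ffun F2vec 2 -> int} => z 0) H; rewrite /= !mk4E.
- by have := congr1 (fun z : {ffun F2vec 2 -> int} => z e1) H; rewrite /= !mk4E.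
- by have := congr1 (fun z : {ffun F2vec 2 -> int} => z e2) H; rewrite /= !mk4E.
- by have := congr1 (fun z : {ffun F2vec 2 -> int} => z e12) H; rewrite /= !mk4E.
Qed.

Lemma mk4D x0 x1 x2 x3 y0 y1 y2 y3 :
  mk4 x0 x1 x2 x3 + mk4 y0 y1 y2 y3 = mk4 (x0 + y0) (x1 + y1) (x2 + y2) (x3 + y3).
Proof. by apply: ffun_eq4; rewrite !ffunE !mk4E. Qed.
Lemma mk4N x0 x1 x2 x3 : - mk4 x0 x1 x2 x3 = mk4 (- x0) (- x1) (- x2) (- x3).
Proof. by apply: ffun_eq4; rewrite !ffunE !mk4E. Qed.
Lemma mk4Z x0 x1 x2 x3 (k : int) :
  mk4 x0 x1 x2 x3 *~ k = mk4 (x0 * k) (x1 * k) (x2 * k) (x3 * k).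
Proof. by apply: ffun_eq4; rewrite !ffunMzE !mk4E !mulrzz. Qed.
Lemma mk4Mn x0 x1 x2 x3 (k : nat) :
  mk4 x0 x1 x2 x3 *+ k = mk4 (x0 * k%:Z) (x1 * k%:Z) (x2 * k%:Z) (x3 * k%:Z).
Proof. exact: (mk4Z x0 x1 x2 x3 k). Qed.

Lemma lap4 (a b c : nat) y0 y1 y2 y3 :
  lap_mul (Mabc a b c) (mk4 y0 y1 y2 y3) =
  mk4 ((a + b + c)%:Z * y0 - a%:Z * y1 - b%:Z * y2 - c%:Z * y3)
      ((a + b + c)%:Z * y1 - a%:Z * y0 - b%:Z * y3 - c%:Z * y2)
      ((a + b + c)%:Z * y2 - a%:Z * y3 - b%:Z * y0 - c%:Z * y1)
      ((a + b + c)%:Z * y3 - a%:Z * y2 - b%:Z * y1 - c%:Z * y0).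
Proof.
apply: ffun_eq4; rewrite lapE !mk4E ?add0r ?e1e1 ?e2e2 ?e12e12 ?e2e1 ?e1e2 ?e12e1 ?e12e2 ?e1e12 ?e2e12 !mk4E //.
Qed.

End A1.
Import A1.

Module A2.
Import GroupScope.

Section GroupLemmas.
Variable gT : finGroupType.

Lemma commK (K : {group gT}) x y : abelian K -> x \in K -> y \in K -> commute x y.
Proof. by move=> cKK xK yK; apply: (centsP cKK). Qed.

Lemma coprime_2elt (p : gT) T : 2.-elt p -> odd T -> coprime #|<[p]>| T.
Proof.
move=> p2 oT; have [k Ek] := p_natP p2; rewrite -/(order p) Ek.
case: k Ek => [|k] _; first by rewrite coprime1n.
by rewrite coprime_pexpl // coprime2n.
Qed.

Lemma two_part_gen (K : {group gT}) (A B p : gT) (T : nat) :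
  abelian K -> A \in K -> B \in K -> 2.-elt p -> odd T ->
  p ^+ T \in <[A]> <*> <[B]> -> p \in <[A.`_2]> <*> <[B.`_2]>.
Proof.
move=> cKK AK BK p2 oT.
have sAK : <[A]> \subset K by rewrite cycle_subG.
have sBK : <[B]> \subset K by rewrite cycle_subG.
rewrite comm_joingE; last by apply: centC; exact: sub_abelian_cent2 cKK sAK sBK.
case/mulsgP=> y z /cycleP[i ->] /cycleP[j ->] Ep.
have Ap : A ^+ i \in K by rewrite groupX.
have Bp : B ^+ j \in K by rewrite groupX.
have Hinv : (p ^+ T) ^+ expg_invn <[p]> T = p.
  by rewrite (expgK (coprime_2elt p2 oT)) // cycle_id.
rewrite -(constt_p_elt p2) -{1}Hinv consttX Ep consttM; last exact: commK cKK Ap Bp.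
rewrite !consttX.
apply: groupX; apply: groupM; apply: groupX.
  by apply: (subsetP (joing_subl _ _)); apply: cycle_id.
by apply: (subsetP (joing_subr _ _)); apply: cycle_id.
Qed.

Lemma final3 (P : {group gT}) (Y Z : gT) :
  abelian P -> P :=: <[Y]> <*> <[Z]> -> #[Z] %| #[Y] ->
  exists x, <[x]> \x <[Y]> = P.
Proof.
move=> cPP PE dZY.
have YP : Y \in P by rewrite PE; apply: (subsetP (joing_subl _ _)); exact: cycle_id.
have ZP : Z \in P by rewrite PE; apply: (subsetP (joing_subr _ _)); exact: cycle_id.
have sYP : <[Y]> \subset P by rewrite cycle_subG.
have sZP : <[Z]> \subset P by rewrite cycle_subG.
have expP : exponent P = #[Y].
  apply/eqP; rewrite eqn_dvd dvdn_exponent // andbT.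
  apply/exponentP => p; rewrite PE comm_joingE; last first.
    by apply: centC; exact: sub_abelian_cent2 cPP sYP sZP.
  case/mulsgP=> y z yY zZ ->.
  have yP : y \in P by apply: (subsetP sYP).
  have zP : z \in P by apply: (subsetP sZP).
  rewrite expgMn; last exact: commK cPP yP zP.
  rewrite -(exponent_cycle Y) (expg_exponent yY) mul1g exponent_cycle.
  have [k ->] := dvdnP dZY.
  by rewrite mulnC expgM -(exponent_cycle Z) (expg_exponent zZ) expg1n.
have [H /complP [tiYH defP]] := splitsP (abelian_splits YP (esym expP) cPP).
have HP : H \subset P by rewrite -defP mulG_subr.
have sd : <[Y]> ><| H = P.
  by rewrite sdprodE //; apply: subset_trans HP _; exact: sub_abelian_norm cPP sYP.
have isoH := sdprod_isog sd.
have cycH : cyclic H.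
  rewrite (isog_cyclic isoH) /=.
  have -> : (P / <[Y]>)%g = (<[Z]> / <[Y]>)%g.
    rewrite PE; apply: quotientYidl.
    by apply: subset_trans sZP _; exact: sub_abelian_norm cPP sYP.
  rewrite quotient_cycle ?cycle_cyclic //.
  by apply: (subsetP (sub_abelian_norm cPP sYP)).
have [x Hx] := cyclicP cycH.
exists x; rewrite dprodC.
have -> : <[x]> = H by rewrite Hx.
rewrite dprodE //.
exact: sub_abelian_cent2 cPP HP sYP.
Qed.

Lemma ord_comp (K P : {group gT}) x Y (f : nat) :
  2.-Sylow(K) P -> <[x]> \x <[Y]> = P -> #[Y] = (2 ^ f)%N ->
  #[x] = (2 ^ (logn 2 #|K| - f))%N.
Proof.
move=> HP D oY.
have cP := dprod_card D.
rewrite (card_Hall HP) p_part in cP.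
change (#[x] * #[Y] = 2 ^ logn 2 #|K|)%N in cP.
have dx : (#[x] %| 2 ^ logn 2 #|K|)%N by rewrite -cP dvdn_mulr.
have px : 2.-nat #[x] by apply: pnat_dvd dx _; rewrite pnatX pnat_id.
have [k Ek] := p_natP px.
rewrite oY Ek -expnD in cP; move/eqP: cP; rewrite eqn_exp2l // => /eqP <-.
by rewrite Ek addnK.
Qed.

End GroupLemmas.

End A2.
Import A2.

Module A3.
Import GRing.Theory.
Local Open Scope ring_scope.

Definition uu := mk4 1 (-1) 0 0.
Definition vv := mk4 1 0 (-1) 0.
Definition ww := mk4 1 0 0 (-1).
Definition c01 := mk4 1 1 (-1) (-1).
Definition c10 := mk4 1 (-1) 1 (-1).
Definition c11 := mk4 1 (-1) (-1) 1.
Definition e0v := mk4 1 0 0 0.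

Ltac mk4_ring := rewrite ?lap4 /uu /vv /ww /c01 /c10 /c11 /e0v; do 4 rewrite ?mk4Mn ?mk4Z ?mk4D ?mk4N;
  apply: mk4_eq; rewrite ?PoszD ?PoszM; ring.

Section Ids.
Variables a b c : nat.
Local Notation L := (lap_mul (Mabc a b c)).
Local Notation A := (a%:Z). Local Notation B := (b%:Z). Local Notation C := (c%:Z).

Lemma id_u : uu *+ (2 * (a + b) * (a + c)) = L (mk4 (2 * A + B + C) 0 (A + B) (A + C)).
Proof. mk4_ring. Qed.
Lemma id_v : vv *+ (2 * (a + b) * (b + c)) = L (mk4 (A + 2 * B + C) (A + B) 0 (B + C)).
Proof. mk4_ring. Qed.
Lemma id_w : ww *+ (2 * (a + c) * (b + c)) = L (mk4 (A + B + 2 * C) (A + C) (B + C) 0).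
Proof. mk4_ring. Qed.
Lemma id_c01 : c01 *+ (b + c) = L (mk4 1 1 0 0). Proof. mk4_ring. Qed.
Lemma id_c10 : c10 *+ (a + c) = L (mk4 1 0 1 0). Proof. mk4_ring. Qed.
Lemma id_c11 : c11 *+ (a + b) = L (mk4 1 0 0 1). Proof. mk4_ring. Qed.
Lemma id_u2 : uu *+ 2 = c10 + c11. Proof. mk4_ring. Qed.
Lemma id_v2 : vv *+ 2 = c01 + c11. Proof. mk4_ring. Qed.
Lemma id_case1u : uu *+ ((a + b) * (a + c)) = vv *+ ((a + b) * (b + c)) + L (mk4 0 (- A) B 0).
Proof. mk4_ring. Qed.
Lemma id_case1w : ww *+ ((a + b) * (a + c)) =
  vv *+ ((a + b) * (a + b + 2 * c)) + L (mk4 (- (A + C)) (- A) B (- (A + C))).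
Proof. mk4_ring. Qed.
Lemma id_case2v : vv *+ ((b + c) * (a + c)) = uu *+ ((a + c) * (a + 2 * b + c)) + L (mk4 (- B) (A + C) (- B) 0).
Proof. mk4_ring. Qed.
Lemma id_case2w : ww *+ ((a + c) * (b + c)) = uu *+ ((a + c) * (a + b)) + L (mk4 0 A 0 (- C)).
Proof. mk4_ring. Qed.
Lemma id_case3 : ww *+ c + uu *+ a + vv *+ b = L e0v.
Proof. mk4_ring. Qed.
Lemma id_dec (x : {ffun F2vec 2 -> int}) :
  x = e0v *~ (x 0 + x e1 + x e2 + x e12) + uu *~ (- x e1) + vv *~ (- x e2) + ww *~ (- x e12).
Proof. rewrite {1}(ffun4 x); mk4_ring. Qed.
End Ids.

End A3.
Import A3.

Module A4.
Import GRing.Theory Num.Theory.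
Local Open Scope ring_scope.

Section Main.
Variables (a b c : nat) (gT : finGroupType) (K : {group gT})
  (f : {ffun F2vec 2 -> int} -> int) (g : {ffun F2vec 2 -> int} -> gT).
Hypothesis fD : forall x y, f (x + y) = f x + f y.
Hypothesis gD : forall x y, g (x + y) = (g x * g y)%g.
Hypothesis gK : forall x, g x \in K.
Hypothesis gS : forall (n : int) (k : gT), k \in K -> exists x, f x = n /\ g x = k.
Hypothesis gL : forall x, (f x = 0 /\ g x = 1%g) <-> exists z, x = lap_mul (Mabc a b c) z.
Local Notation L := (lap_mul (Mabc a b c)).

Lemma g0 : g 0 = 1%g.
Proof. by apply: (@mulgI _ (g 0)); rewrite mulg1 -gD addr0. Qed.

Lemma gMn x k : g (x *+ k) = (g x ^+ k)%g.
Proof. by elim: k => [|k IH]; rewrite ?mulr0n ?g0 // mulrS gD IH expgS. Qed.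

Lemma gN x : g (- x) = (g x)^-1%g.
Proof. by apply: (@mulgI _ (g x)); rewrite -gD subrr g0 mulgV. Qed.

Lemma gZ x (k : int) : g (x *~ k) \in <[g x]>%g.
Proof.
case: k => k; first by rewrite -pmulrn gMn mem_cycle.
by rewrite NegzE mulrNz gN groupV -pmulrn gMn mem_cycle.
Qed.

Lemma f0 : f 0 = 0.
Proof. by apply: (@addrI _ (f 0)); rewrite -fD !addr0. Qed.

Lemma fMn x k : f (x *+ k) = f x *+ k.
Proof. by elim: k => [|k IH]; rewrite ?mulr0n ?f0 // !mulrS fD IH. Qed.

Lemma fN x : f (- x) = - f x.
Proof. by apply: (@addrI _ (f x)); rewrite -fD !subrr f0. Qed.

Lemma fZ x (k : int) : f (x *~ k) = f x * k.
Proof.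
rewrite -mulrzz; case: k => k; first by rewrite -!pmulrn fMn.
by rewrite NegzE !mulrNz fN -!pmulrn fMn.
Qed.

Lemma gL1 y : g (L y) = 1%g.
Proof. by have [_ ->] := (proj2 (gL (L y))) (ex_intro _ y erefl). Qed.

Lemma fL0 y : f (L y) = 0.
Proof. by have [-> _] := (proj2 (gL (L y))) (ex_intro _ y erefl). Qed.

Lemma Kab : abelian K.
Proof.
apply/centsP => k1 k1K k2 k2K.
have [x1 [_ <-]] := gS 0 k1K; have [x2 [_ <-]] := gS 0 k2K.
by rewrite /commute -!gD addrC.
Qed.

Lemma torsion_f x N y : (0 < N)%N -> x *+ N = L y -> f x = 0.
Proof.
move=> N0 E; have := fL0 y; rewrite -E fMn => /eqP.
rewrite mulrn_eq0 => /orP[|/eqP //]; by rewrite eqn0Ngt N0.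
Qed.

Lemma inL_of x j : f x = 0 -> g (x *+ j) = 1%g -> exists y, x *+ j = L y.
Proof. by move=> fx gx; apply/gL; rewrite fMn fx mul0rn. Qed.


Hypothesis Ha : (0 < a)%N.
Hypothesis Hbc : (0 < b + c)%N.

Lemma fu0 : f uu = 0.
Proof. by apply: (torsion_f _ (id_u a b c)); rewrite !muln_gt0 /=; lia. Qed.
Lemma fv0 : f vv = 0.
Proof. by apply: (torsion_f _ (id_v a b c)); rewrite !muln_gt0 /=; lia. Qed.
Lemma fw0 : f ww = 0.
Proof. by apply: (torsion_f _ (id_w a b c)); rewrite !muln_gt0 /=; lia. Qed.

Lemma f_dec x : f x = f e0v * (x 0 + x e1 + x e2 + x e12).
Proof. by rewrite {1}(id_dec x) !fD !fZ fu0 fv0 fw0 !mul0r !addr0. Qed.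

Lemma fe0 : f e0v != 0.
Proof.
have [x [fx _]] := gS 1 (group1 K).
by apply/eqP => H; move: fx; rewrite f_dec H mul0r.
Qed.

Lemma Kgen k : k \in K -> exists x1 x2 x3 : int, k = g (uu *~ x1 + vv *~ x2 + ww *~ x3).
Proof.
move=> kK; have [x [fx <-]] := gS 0 kK.
have E : x 0 + x e1 + x e2 + x e12 = 0.
  by apply/eqP; move: fx; rewrite f_dec => /eqP; rewrite mulf_eq0 (negbTE fe0).
exists (- x e1), (- x e2), (- x e12).
by rewrite {1}(id_dec x) E mulr0z add0r.
Qed.

Lemma gen_pow (H : {group gT}) (tu tv tw : nat) k :
  g (uu *+ tu) \in H -> g (vv *+ tv) \in H -> g (ww *+ tw) \in H -> k \in K ->
  (k ^+ (tu * tv * tw) \in H)%g.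
Proof.
move=> Hu Hv Hw kK; have [x1 [x2 [x3 ->]]] := Kgen kK.
rewrite -gMn.
have -> : (uu *~ x1 + vv *~ x2 + ww *~ x3) *+ (tu * tv * tw) =
   (uu *+ tu) *~ (x1 * tv%:Z * tw%:Z) + (vv *+ tv) *~ (x2 * tu%:Z * tw%:Z)
   + (ww *+ tw) *~ (x3 * tu%:Z * tv%:Z) by mk4_ring.
rewrite !gD; apply: groupM; first apply: groupM.
- by apply: (subsetP _ _ (gZ _ _)); rewrite cycle_subG.
- by apply: (subsetP _ _ (gZ _ _)); rewrite cycle_subG.
- by apply: (subsetP _ _ (gZ _ _)); rewrite cycle_subG.
Qed.

Lemma eq_sub0 (x y : int) : x = y -> x - y = 0.
Proof. by move->; rewrite subrr. Qed.

Lemma lincomb (X Y X0 X1 X2 X3 p0 p1 p2 p3 : int) :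
  X0 = 0 -> X1 = 0 -> X2 = 0 -> X3 = 0 ->
  X - Y = p0 * X0 + p1 * X1 + p2 * X2 + p3 * X3 -> X = Y.
Proof.
move=> -> -> -> -> E; apply/eqP; rewrite -subr_eq0 E; apply/eqP; ring.
Qed.

Lemma int_div (d j : nat) (k : int) : j%:Z = d%:Z * k -> (d %| j)%N.
Proof.
move=> E; have : (d%:Z %| j%:Z)%Z by apply/dvdzP; exists k; rewrite E mulrC.
by rewrite dvdzE !absz_nat.
Qed.

Lemma nat_ne0 (n : nat) : (0 < n)%N -> n%:Z != 0.
Proof. by rewrite lt0n. Qed.

Lemma Ulow j : g (uu *+ j) = 1%g -> (2 * (a + c) %| j)%N /\ (2 * (a + b) %| j)%N.
Proof.
move=> Hj; have [y Ey] := inL_of fu0 Hj.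
rewrite (ffun4 y) lap4 /uu mk4Mn in Ey.
case: (mk4_inj Ey) => /eq_sub0 d0 /eq_sub0 d1 /eq_sub0 d2 /eq_sub0 d3.
have bc0 : (b + c)%:Z != 0 by apply: nat_ne0.
have t0 : 2%:Z != 0 by [].
split.
- apply: (@int_div _ _ (y 0 - y e12)).
  apply: (mulfI t0); apply: (mulfI bc0).
  apply: (@lincomb _ _ _ _ _ _ (a%:Z + b%:Z + 2 * c%:Z) (a%:Z - b%:Z) (b%:Z - a%:Z) (- (a%:Z + b%:Z + 2 * c%:Z)) d0 d1 d2 d3).
  rewrite !PoszM !PoszD; ring.
- apply: (@int_div _ _ (y 0 - y e2)).
  apply: (mulfI t0); apply: (mulfI bc0).
  apply: (@lincomb _ _ _ _ _ _ (a%:Z + 2 * b%:Z + c%:Z) (a%:Z - c%:Z) (- (a%:Z + 2 * b%:Z + c%:Z)) (c%:Z - a%:Z) d0 d1 d2 d3).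
  rewrite !PoszM !PoszD; ring.
Qed.

Lemma Vlow j : g (vv *+ j) = 1%g -> (2 * (a + b) %| j)%N /\ (2 * (b + c) %| j)%N.
Proof.
move=> Hj; have [y Ey] := inL_of fv0 Hj.
rewrite (ffun4 y) lap4 /vv mk4Mn in Ey.
case: (mk4_inj Ey) => /eq_sub0 d0 /eq_sub0 d1 /eq_sub0 d2 /eq_sub0 d3.
have ac0 : (a + c)%:Z != 0 by apply: nat_ne0; lia.
have t0 : 2%:Z != 0 by [].
split.
- apply: (@int_div _ _ (y 0 - y e1)).
  apply: (mulfI t0); apply: (mulfI ac0).
  apply: (@lincomb _ _ _ _ _ _ (2 * a%:Z + b%:Z + c%:Z) (- (2 * a%:Z + b%:Z + c%:Z)) (b%:Z - c%:Z) (c%:Z - b%:Z) d0 d1 d2 d3).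
  rewrite !PoszM !PoszD; ring.
- apply: (@int_div _ _ (y 0 - y e12)).
  apply: (mulfI t0); apply: (mulfI ac0).
  apply: (@lincomb _ _ _ _ _ _ (a%:Z + b%:Z + 2 * c%:Z) (a%:Z - b%:Z) (b%:Z - a%:Z) (- (a%:Z + b%:Z + 2 * c%:Z)) d0 d1 d2 d3).
  rewrite !PoszM !PoszD; ring.
Qed.

Lemma ordL x N y : x *+ N = L y -> (order (g x) %| N)%N.
Proof. by move=> E; rewrite order_dvdn -gMn E gL1. Qed.

Lemma commg x y : commute (g x) (g y).
Proof. by apply: commK Kab (gK x) (gK y). Qed.

Lemma Uord : order (g uu) = (2 * lcmn (a + b) (a + c))%N.
Proof.
apply/eqP; rewrite eqn_dvd; apply/andP; split.
  rewrite order_dvdn expgM -gMn id_u2 gD expgMn; last exact: commg.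
  have o10 := ordL (id_c10 a b c); have o11 := ordL (id_c11 a b c).
  have -> : (g c10 ^+ lcmn (a + b) (a + c) = 1)%g.
    by apply/eqP; rewrite -order_dvdn (dvdn_trans o10) // dvdn_lcmr.
  have -> : (g c11 ^+ lcmn (a + b) (a + c) = 1)%g.
    by apply/eqP; rewrite -order_dvdn (dvdn_trans o11) // dvdn_lcml.
  by rewrite mulg1.
have [h1 h2] := Ulow (etrans (gMn _ _) (expg_order (g uu))).
by rewrite muln_lcmr dvdn_lcm h1 h2.
Qed.

Lemma Vord : order (g vv) = (2 * lcmn (a + b) (b + c))%N.
Proof.
apply/eqP; rewrite eqn_dvd; apply/andP; split.
  rewrite order_dvdn expgM -gMn id_v2 gD expgMn; last exact: commg.
  have o01 := ordL (id_c01 a b c); have o11 := ordL (id_c11 a b c).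
  have -> : (g c01 ^+ lcmn (a + b) (b + c) = 1)%g.
    by apply/eqP; rewrite -order_dvdn (dvdn_trans o01) // dvdn_lcmr.
  have -> : (g c11 ^+ lcmn (a + b) (b + c) = 1)%g.
    by apply/eqP; rewrite -order_dvdn (dvdn_trans o11) // dvdn_lcml.
  by rewrite mulg1.
have [h1 h2] := Vlow (etrans (gMn _ _) (expg_order (g vv))).
by rewrite muln_lcmr dvdn_lcm h1 h2.
Qed.

Lemma logn22 : logn 2 2 = 1%N.
Proof. by rewrite logn_prime. Qed.

Lemma Uord2 : order ((g uu).`_2) = (2 ^ (maxn (logn 2 (a + b)) (logn 2 (a + c))).+1)%N.
Proof.
rewrite order_constt Uord p_part lognM ?lcmn_gt0 //; last by apply/andP; split; lia.
by rewrite logn_lcm ?logn22 //; lia.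
Qed.

Lemma Vord2 : order ((g vv).`_2) = (2 ^ (maxn (logn 2 (a + b)) (logn 2 (b + c))).+1)%N.
Proof.
rewrite order_constt Vord p_part lognM ?lcmn_gt0 //; last by apply/andP; split; lia.
by rewrite logn_lcm ?logn22 //; lia.
Qed.

Lemma sylow_join (P : {group gT}) (A B : gT) (tu tv tw : nat) :
  (2.-Sylow(K) P)%g -> A \in K -> B \in K -> odd tu -> odd tv -> odd tw ->
  g (uu *+ tu) \in (<[A]> <*> <[B]>)%G -> g (vv *+ tv) \in (<[A]> <*> <[B]>)%G ->
  g (ww *+ tw) \in (<[A]> <*> <[B]>)%G ->
  P :=: (<[A.`_2]> <*> <[B.`_2]>)%g.
Proof.
move=> HP AK BK ou ov ow Hu Hv Hw.
have sPK := pHall_sub HP.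
have nPK : (P <| K)%g by rewrite -sub_abelian_normal ?Kab.
have memP x : x \in K -> (x \in P) = 2.-elt%g x := mem_normal_Hall HP nPK.
apply/eqP; rewrite eqEsubset; apply/andP; split.
  apply/subsetP => p pP.
  have pK : p \in K by apply: (subsetP sPK).
  have p2 : 2.-elt%g p by rewrite -memP.
  apply: (two_part_gen Kab AK BK p2 (T := tu * tv * tw)); first by rewrite !oddM ou ov ow.
  exact: gen_pow.
rewrite join_subG !cycle_subG !memP ?p_elt_constt //.
  by apply: (subsetP _ _ (cycle_constt _ _)); rewrite cycle_subG.
by apply: (subsetP _ _ (cycle_constt _ _)); rewrite cycle_subG.
Qed.

End Main.

End A4.
Import A4.

Import GRing.Theory.

Lemma gen_bc (a b c : nat) : (<<Mabc a b c>>)%VS = fullv -> (0 < b + c)%N.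
Proof.
move=> H; rewrite lt0n; apply/negP; rewrite addn_eq0 => /andP[/eqP b0 /eqP c0].
subst b c.
have : (<<Mabc a 0 0>> <= <[e1]>)%VS.
  apply/span_subvP => x; rewrite /Mabc /= cats0 => /nseqP [-> _]; exact: memv_line.
rewrite H => /dimvS; rewrite dimvf dim_vline ne10 /=.
by rewrite dim_matrix.
Qed.

Unset Implicit Arguments.

Theorem mainTheorem14 (a b c : nat)
  (Hgcd : gcdn (gcdn a b) c = 1%N)
  (Hgen : (<<Mabc a b c>>)%VS = fullv)
  (gT : finGroupType) (K : {group gT})
  (HK : is_sandpile_group (Mabc a b c) K)
  (P : {group gT}) (HP : (2.-Sylow(K) P)%g) :
  [/\ (odd a && ~~ odd b && ~~ odd c ->
         exists x : gT, P :=: <[x]>%g /\ #[x]%g = 2 ^ (logn 2 (b + c)).+1),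
      (odd a && odd b && ~~ odd c ->
         exists x : gT, P :=: <[x]>%g /\ #[x]%g = 2 ^ (logn 2 (a + b)).+1)
    & (odd a && odd b && odd c ->
         let f := (maxn (maxn (logn 2 (a + b)) (logn 2 (b + c))) (logn 2 (a + c))).+1 in
         let e := (logn 2 #|K| - f)%N in
         exists x y : gT, (<[x]> \x <[y]>)%g = P /\ #[x]%g = 2 ^ e /\ #[y]%g = 2 ^ f)].
Proof.
case: HK => f [g [fD gD gK gS gL]].
have joinl (A B : gT) y : y \in <[A]>%g -> y \in (<[A]> <*> <[B]>)%G.
  by move=> yA; apply: (subsetP (joing_subl _ _)).
have joinr (A B : gT) y : y \in <[B]>%g -> y \in (<[A]> <*> <[B]>)%G.
  by move=> yB; apply: (subsetP (joing_subr _ _)).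
have joinxx (X : gT) : (<[X]> <*> <[X]>)%g = <[X]>%g.
  by apply/eqP; rewrite eqEsubset join_subG subxx joing_subl.
split.
- case/andP => /andP [oa eb] ec.
  have Ha := odd_gt0 oa.
  have Hbc := gen_bc Hgen.
  have PE := @sylow_join a b c gT K f g fD gD gS gL Ha Hbc P (g vv) (g vv)
     ((a + b) * (a + c)) 1 ((a + b) * (a + c)) HP (gK _) (gK _).
  exists ((g vv).`_2)%g; split.
    rewrite PE ?joinxx //.
    + by rewrite oddM !oddD oa (negbTE eb) (negbTE ec).
    + by rewrite oddM !oddD oa (negbTE eb) (negbTE ec).
    + by rewrite id_case1u gD (gL1 gL) mulg1 (gMn gD) joinl // mem_cycle.
    + by rewrite (gMn gD) joinl // mem_cycle.
    + by rewrite id_case1w gD (gL1 gL) mulg1 (gMn gD) joinl // mem_cycle.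
  rewrite (Vord2 fD gD gK gS gL Ha Hbc) (@logn_coprime 2 (a + b)) ?max0n //.
  by rewrite coprime2n oddD oa (negbTE eb).
- case/andP => /andP [oa ob] ec.
  have Ha := odd_gt0 oa.
  have Hbc : (0 < b + c)%N by have := odd_gt0 ob; lia.
  have PE := @sylow_join a b c gT K f g fD gD gS gL Ha Hbc P (g uu) (g uu)
     1 ((b + c) * (a + c)) ((a + c) * (b + c)) HP (gK _) (gK _).
  exists ((g uu).`_2)%g; split.
    rewrite PE ?joinxx //.
    + by rewrite oddM !oddD oa ob (negbTE ec).
    + by rewrite oddM !oddD oa ob (negbTE ec).
    + by rewrite (gMn gD) joinl // mem_cycle.
    + by rewrite id_case2v gD (gL1 gL) mulg1 (gMn gD) joinl // mem_cycle.
    + by rewrite id_case2w gD (gL1 gL) mulg1 (gMn gD) joinl // mem_cycle.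
  rewrite (Uord2 fD gD gK gS gL Ha Hbc) (@logn_coprime 2 (a + c)) ?maxn0 //.
  by rewrite coprime2n oddD oa (negbTE ec).
- case/andP => /andP [oa ob] oc; cbv zeta.
  have Ha := odd_gt0 oa.
  have Hbc : (0 < b + c)%N by have := odd_gt0 ob; lia.
  have PE := @sylow_join a b c gT K f g fD gD gS gL Ha Hbc P (g uu) (g vv)
     1 1 c HP (gK _) (gK _) isT isT oc.
  have {}PE : P :=: (<[((g uu).`_2)%g]> <*> <[((g vv).`_2)%g]>)%g.
    apply: PE.
    + by rewrite (gMn gD) joinl // mem_cycle.
    + by rewrite (gMn gD) joinr // mem_cycle.
    + have -> : (ww *+ c = lap_mul (Mabc a b c) e0v + - (uu *+ a) + - (vv *+ b))%R by mk4_ring.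
      rewrite !gD (gL1 gL) mul1g !(gN gD) !(gMn gD).
      by apply: groupM; rewrite groupV; [apply: joinl | apply: joinr]; exact: mem_cycle.
  have cKK : abelian K := Kab gD gS.
  have cPP : abelian P := abelianS (pHall_sub HP) cKK.
  have oU := Uord2 fD gD gK gS gL Ha Hbc.
  have oV := Vord2 fD gD gK gS gL Ha Hbc.
  case: (leqP (logn 2 (b + c)) (maxn (logn 2 (a + b)) (logn 2 (a + c)))) => Hl.
    have dZY : (#[((g vv).`_2)%g] %| #[((g uu).`_2)%g])%g.
      by rewrite oU oV dvdn_Pexp2l //; lia.
    have [x D] := final3 cPP PE dZY.
    have oY : #[((g uu).`_2)%g]%g = 2 ^ (maxn (maxn (logn 2 (a + b)) (logn 2 (b + c))) (logn 2 (a + c))).+1.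
      by rewrite oU; congr (2 ^ _); lia.
    exists x, ((g uu).`_2)%g; split => //; split => //.
    exact: ord_comp HP D oY.
  have PE' : P :=: (<[((g vv).`_2)%g]> <*> <[((g uu).`_2)%g]>)%g by rewrite PE joingC.
  have dZY : (#[((g uu).`_2)%g] %| #[((g vv).`_2)%g])%g.
    by rewrite oU oV dvdn_Pexp2l //; lia.
  have [x D] := final3 cPP PE' dZY.
  have oY : #[((g vv).`_2)%g]%g = 2 ^ (maxn (maxn (logn 2 (a + b)) (logn 2 (b + c))) (logn 2 (a + c))).+1.
    by rewrite oV; congr (2 ^ _); lia.
  exists x, ((g vv).`_2)%g; split => //; split => //.
  exact: ord_comp HP D oY.
Qed.
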